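(* Let $G=(V,E,w)$ be a connected undirected graph with positive edge weights, $|V|=n$, and weighted Laplacian $\mathbf{L}$. Let $v\in V$ and let $e=\{u,v\}\notin E$, $u\neq v$, be a candidate edge with given weight $w(e)>0$, and set $\mathbf{b}_e=\mathbf{e}_u-\mathbf{e}_v$ (either orientation). Let $\mathcal{R}_v^\Delta(e)=\mathcal{R}_v(G)-\mathcal{R}_v(G+e)$, where $G+e$ is $G$ with edge $e$ of weight $w(e)$ added. Then $$\mathcal{R}_v^\Delta(e)=\frac{w(e)\left(n\left(\mathbf{L}^\dagger\mathbf{b}_e\mathbf{b}_e^\top\mathbf{L}^\dagger\right)_{vv}+\operatorname{Tr}\left(\mathbf{L}^\dagger\mathbf{b}_e\mathbf{b}_e^\top\mathbf{L}^\dagger\right)\right)}{1+w(e)\,\mathbf{b}_e^\top\mathbf{L}^\dagger\mathbf{b}_e}.$$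
   Context: The Laplacian of a weighted graph is $\mathbf{L}=\mathbf{D}-\mathbf{A}$ with $\mathbf{A}$ the weighted adjacency matrix and $\mathbf{D}$ the diagonal weighted degree matrix; $\mathbf{L}^\dagger$ is its Moore–Penrose pseudoinverse; $\mathbf{e}_i$ are standard basis vectors. The resistance distance between nodes $a,b$ is $\mathcal{R}_{ab}=(\mathbf{e}_a-\mathbf{e}_b)^\top\mathbf{L}^\dagger(\mathbf{e}_a-\mathbf{e}_b)$, and the resistance distance of node $v$ in a graph is $\mathcal{R}_v=\sum_{u\in V}\mathcal{R}_{uv}$. *)

(* Defs.v *)
From mathcomp Require Import all_boot all_order all_algebra.
Set Implicit Arguments. Unset Strict Implicit. Unset Printing Implicit Defensive.
Import Order.TTheory GRing.Theory Num.Theory.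
Local Open Scope ring_scope.

Definition degmx (R : realFieldType) (n : nat) (A : 'M[R]_n) : 'M[R]_n :=
  diag_mx (\row_i \sum_j A i j).
Definition laplacian (R : realFieldType) (n : nat) (A : 'M[R]_n) : 'M[R]_n :=
  degmx A - A.

(* A is the weighted adjacency matrix of an undirected graph with positive
   edge weights and no self loops: edge {i,j} present iff A i j > 0 *)
Definition weighted_graph (R : realFieldType) (n : nat) (A : 'M[R]_n) : Prop :=
  (forall i j, A i j = A j i) /\ (forall i, A i i = 0) /\ (forall i j, 0 <= A i j).

Definition edge_rel (R : realFieldType) (n : nat) (A : 'M[R]_n) : rel 'I_n :=
  fun i j => 0 < A i j.

Definition connected_graph (R : realFieldType) (n : nat) (A : 'M[R]_n) : Prop :=
  forall i j : 'I_n, connect (edge_rel A) i j.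

(* X is the Moore-Penrose pseudoinverse of M (real entries: ^T = conj. transpose) *)
Definition is_MPinv (R : realFieldType) (n : nat) (M X : 'M[R]_n) : Prop :=
  [/\ M *m X *m M = M, X *m M *m X = X,
      (M *m X)^T = M *m X & (X *m M)^T = X *m M].

Definition evec (R : realFieldType) (n : nat) (i : 'I_n) : 'cV[R]_n :=
  delta_mx i 0.

(* resistance distance R_ab computed from the pseudoinverse Lp of L *)
Definition resist (R : realFieldType) (n : nat) (Lp : 'M[R]_n) (a b : 'I_n) : R :=
  ((evec R a - evec R b)^T *m Lp *m (evec R a - evec R b)) 0 0.

Definition node_resist (R : realFieldType) (n : nat) (Lp : 'M[R]_n) (v : 'I_n) : R :=
  \sum_u resist Lp u v.

Definition add_edge (R : realFieldType) (n : nat) (A : 'M[R]_n) (u v : 'I_n) (w : R)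
  : 'M[R]_n := A + w *: (delta_mx u v + delta_mx v u).

(* Main.v *)
Require Import Defs.
From mathcomp Require Import all_boot all_order all_algebra ring lra.
Import Order.TTheory GRing.Theory Num.Theory.
Local Open Scope ring_scope.

Section Aux.
Variables (R : realFieldType) (n : nat).
Implicit Types (A M X Y : 'M[R]_n).

Lemma mp_unique M X Y : is_MPinv M X -> is_MPinv M Y -> X = Y.
Proof.
case=> h1 h2 h3 h4 [k1 k2 k3 k4].
have e1: X = X *m X^T *m M^T by rewrite -mulmxA -(trmx_mul M X) h3 mulmxA h2.
have e2: M^T = M^T *m (M *m Y) by rewrite -k3 -(trmx_mul (M *m Y) M) k1.
have eX : X = X *m M *m Y.
  rewrite {1}e1 e2 mulmxA -(mulmxA X) -(trmx_mul M X) h3.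
  by rewrite !mulmxA h2.
have f1: Y = M^T *m Y^T *m Y by rewrite -(trmx_mul Y M) k4 k2.
have f2: M^T = (X *m M) *m M^T by rewrite -h4 -(trmx_mul M (X *m M)) mulmxA h1.
have eY : Y = X *m M *m Y.
  rewrite {1}f1 f2 -(mulmxA _ M^T) -(trmx_mul Y M) k4.
  by rewrite -!mulmxA (mulmxA Y) k2.
by rewrite eX -eY.
Qed.

Lemma lapE A i j : laplacian A i j = (\sum_k A i k) *+ (i == j) - A i j.
Proof. by rewrite /laplacian /degmx !mxE. Qed.

Lemma lap_mul A (x : 'cV[R]_n) i : (laplacian A *m x) i 0 = \sum_j A i j * (x i 0 - x j 0).
Proof.
rewrite mxE.
under eq_bigr do rewrite lapE mulrBl.
rewrite sumrB (bigD1 i) //= [\sum_(j | j != i) _]big1 ?addr0; last first.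
  by move=> j; rewrite eq_sym => /negbTE ->; rewrite mulr0n mul0r.
rewrite eqxx mulr1n ?addr0 big_distrl -sumrB; apply: eq_bigr => j _.
by rewrite mulrBr.
Qed.

Lemma lap_ones A : laplacian A *m (const_mx 1 : 'cV[R]_n) = 0.
Proof.
apply/matrixP => i j; rewrite ord1 lap_mul [RHS]mxE big1 // => k _.
by rewrite !mxE subrr mulr0.
Qed.

Lemma lap_sym A : (forall i j, A i j = A j i) -> (laplacian A)^T = laplacian A.
Proof.
move=> sA; apply/matrixP => i j; rewrite mxE !lapE sA.
by case: (eqVneq i j) => [->|nij]; rewrite ?eqxx // eq_sym (negbTE nij).
Qed.

Lemma lap_quad A (x : 'cV[R]_n) : (forall i j, A i j = A j i) ->
  2 * \sum_i x i 0 * (laplacian A *m x) i 0 =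
  \sum_i \sum_j A i j * (x i 0 - x j 0) ^+ 2.
Proof.
move=> sA.
have -> : \sum_i x i 0 * (laplacian A *m x) i 0 =
   \sum_i \sum_j A i j * (x i 0 * (x i 0 - x j 0)).
  apply: eq_bigr => i _; rewrite lap_mul big_distrr; apply: eq_bigr => j _.
  by rewrite mulrCA.
rewrite mulr_natl mulr2n {2}exchange_big -big_split; apply: eq_bigr => i _.
rewrite -big_split; apply: eq_bigr => j _; rewrite /= (sA j i); ring.
Qed.

Lemma lap_ker A (y : 'cV[R]_n) : weighted_graph A -> connected_graph A ->
  laplacian A *m y = 0 -> forall i j, y i 0 = y j 0.
Proof.
case=> [sA [_ nn]] conn Ly.
have h : \sum_i \sum_j A i j * (y i 0 - y j 0) ^+ 2 = 0.
  by rewrite -lap_quad // big1 ?mulr0 // => i _; rewrite Ly mxE mulr0.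
have edge : forall i j, 0 < A i j -> y i 0 = y j 0.
  move=> i j Aij.
  have hi := psumr_eq0P (fun i _ => sumr_ge0 _ (fun j _ => mulr_ge0 (nn i j) (sqr_ge0 _))) h.
  have := psumr_eq0P (fun j _ => mulr_ge0 (nn i j) (sqr_ge0 _)) (hi i isT).
  move=> /(_ j isT) /eqP; rewrite mulf_eq0 gt_eqF //= sqrf_eq0 subr_eq0.
  by move/eqP.
move=> i j; have := conn i j; case/connectP => p pth ->.
elim: p i pth => [|k p IH] i //= /andP [eik pth].
rewrite (edge _ _ eik); exact: IH.
Qed.

Lemma lap_psd A (x : 'cV[R]_n) : weighted_graph A ->
  0 <= (x^T *m laplacian A *m x) 0 0.
Proof.
case=> [sA [_ nn]].
have -> : (x^T *m laplacian A *m x) 0 0 = \sum_i x i 0 * (laplacian A *m x) i 0.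
  by rewrite -mulmxA mxE; apply: eq_bigr => i _; rewrite mxE.
have : 0 <= 2 * \sum_i x i 0 * (laplacian A *m x) i 0.
  rewrite lap_quad //; apply: sumr_ge0 => i _; apply: sumr_ge0 => j _.
  exact: mulr_ge0 (nn i j) (sqr_ge0 _).
by rewrite pmulr_rge0.
Qed.


Lemma mp_tr M X : is_MPinv M X -> is_MPinv M^T X^T.
Proof.
case=> h1 h2 h3 h4; split.
- by rewrite -(trmx_mul X M) -(trmx_mul M (X *m M)) mulmxA h1.
- by rewrite -(trmx_mul M X) -(trmx_mul X (M *m X)) mulmxA h2.
- by rewrite -(trmx_mul X M) !h4.
- by rewrite -(trmx_mul M X) !h3.
Qed.

Lemma mp_props A X : (forall i j, A i j = A j i) -> is_MPinv (laplacian A) X ->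
  [/\ X^T = X, X *m (const_mx 1 : 'cV[R]_n) = 0 &
      laplacian A *m X = X *m laplacian A].
Proof.
move=> sA mp; have LT := lap_sym A sA.
have XT : X^T = X.
  by apply: (mp_unique (laplacian A)) => //; rewrite -{1}LT; apply: mp_tr.
case: mp => h1 h2 h3 h4; split => //.
- rewrite -h2 -(mulmxA X _ X) -h3 (trmx_mul (laplacian A) X) LT -!mulmxA lap_ones.
  by rewrite !mulmx0.
- by rewrite -h3 (trmx_mul (laplacian A) X) LT XT.
Qed.

Lemma entryB (m p : nat) (P Q : 'M[R]_(m, p)) i j : (P - Q) i j = P i j - Q i j.
Proof. by rewrite !mxE. Qed.
Lemma entryD (m p : nat) (P Q : 'M[R]_(m, p)) i j : (P + Q) i j = P i j + Q i j.
Proof. by rewrite !mxE. Qed.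
Lemma entryZ (m p : nat) (a : R) (P : 'M[R]_(m, p)) i j : (a *: P) i j = a * P i j.
Proof. by rewrite !mxE. Qed.

Lemma quad_evec X a b : ((evec R a)^T *m X *m evec R b) 0 0 = X a b.
Proof. by rewrite /evec trmx_delta -rowE -colE !mxE. Qed.

Lemma resistE X a b : resist X a b = X a a - X a b - X b a + X b b.
Proof.
rewrite /resist [(_ - _)^T]linearB /= !mulmxBl !mulmxBr !entryB !quad_evec.
ring.
Qed.

Lemma nrE X v : X^T = X -> X *m (const_mx 1 : 'cV[R]_n) = 0 ->
  node_resist X v = \tr X + n%:R * X v v.
Proof.
move=> XT X1; rewrite /node_resist.
under eq_bigr do rewrite resistE.
rewrite big_split /= !sumrB sumr_const card_ord.
have r0 : \sum_u X v u = 0.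
  have := congr1 (fun m : 'cV[R]_n => m v 0) X1; rewrite !mxE => h.
  rewrite -[RHS]h; apply: eq_big => // u _; by rewrite mxE mulr1.
have c0 : \sum_u X u v = 0.
  by rewrite -[RHS]r0; apply: eq_big => // u _; rewrite -{1}XT mxE.
by rewrite r0 c0 !subr0 mulr_natl.
Qed.


Lemma sum_delta (a : bool) (v : 'I_n) : \sum_k ((a && (k == v))%:R : R) = a%:R.
Proof.
rewrite (bigD1 v) //= eqxx andbT big1 ?addr0 // => k /negbTE ->.
by rewrite andbF.
Qed.

Lemma bool_id (S Aij w : R) (a b c d e : bool) :
  ~~ (a && b) -> ~~ (c && d) -> (e ==> (a == c) && (b == d)) ->
  (a && c ==> e) -> (b && d ==> e) ->
  (S + w * (a%:R + b%:R)) *+ e - (Aij + w * ((a && d)%:R + (b && c)%:R)) =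
  S *+ e - Aij + w * ((a%:R - b%:R) * (c%:R - d%:R)).
Proof.
by case: a; case: b; case: c; case: d; case: e => //= *; rewrite ?mulr1n ?mulr0n; ring.
Qed.

Lemma lap_add A u v w : u != v ->
  laplacian (add_edge A u v w) =
  laplacian A + w *: ((evec R u - evec R v) *m (evec R u - evec R v)^T).
Proof.
move=> uv; apply/matrixP => i j; rewrite [RHS]entryD entryZ !lapE.
have sd : \sum_k add_edge A u v w i k = \sum_k A i k + w * ((i==u)%:R + (i==v)%:R).
  rewrite /add_edge; under eq_bigr do rewrite entryD entryZ entryD !mxE.
  by rewrite big_split /= -mulr_sumr big_split /= !sum_delta.
rewrite sd [(_ *m _) i j]mxE big_ord1 /add_edge !mxE /= ?eqxx ?andbT.
apply: bool_id.
- by apply/negP => /andP [/eqP -> /eqP uv']; rewrite uv' eqxx in uv.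
- by apply/negP => /andP [/eqP -> /eqP uv']; rewrite uv' eqxx in uv.
- by apply/implyP => /eqP ->; rewrite !eqxx.
- by apply/implyP => /andP [/eqP -> /eqP ->].
- by apply/implyP => /andP [/eqP -> /eqP ->].
Qed.

End Aux.
Arguments mp_unique {R n M X Y}.
Arguments mp_props {R n A X}.
Arguments lap_ker {R n A y}.
Arguments lap_psd {R n A x}.
Arguments lap_sym {R n A}.
Arguments nrE {R n X}.

Theorem lemma2 (R : realFieldType) (n : nat) (A : 'M[R]_n) (u v : 'I_n) (w : R)
    (Lp Lp' : 'M[R]_n) :
  weighted_graph A -> connected_graph A ->
  u != v -> A u v = 0 -> 0 < w ->
  is_MPinv (laplacian A) Lp ->
  is_MPinv (laplacian (add_edge A u v w)) Lp' ->
  let b := evec R u - evec R v in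
  let M := Lp *m b *m b^T *m Lp in
  node_resist Lp v - node_resist Lp' v =
    w * (n%:R * M v v + \tr M) / (1 + w * (b^T *m Lp *m b) 0 0).
Proof.
move=> wg conn uv Auv w0 mpL mpL' b M.
have [sA [dA nn]] := wg.
have [XT X1 LX] := mp_props sA mpL.
have sA2 : forall i j, add_edge A u v w i j = add_edge A u v w j i.
  move=> i j; rewrite /add_edge !mxE sA; congr (_ + _ * _).
  by rewrite addrC andbC [((j == v) && _)]andbC.
have [XT' X1' _] := mp_props sA2 mpL'.
have Ladd : laplacian (add_edge A u v w) = laplacian A + w *: (b *m b^T)
  := lap_add R n A u v w uv.
set L := laplacian A.
case: mpL => h1 h2 h3 h4.
have Pb : Lp *m L *m b = b.
  set y := b - Lp *m L *m b.
  have Ly : L *m y = 0 by rewrite mulmxBr !mulmxA h1 subrr.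
  have yc := lap_ker wg conn Ly.
  have ones_b : (const_mx 1 : 'cV[R]_n)^T *m b = 0.
    rewrite /b /evec mulmxBr -!colE; apply/matrixP => i j.
    by rewrite !ord1 !mxE subrr.
  have oLp : (const_mx 1 : 'cV[R]_n)^T *m Lp = 0.
    by rewrite -XT -(trmx_mul Lp (const_mx 1)) X1 trmx0.
  have sum0 : \sum_i y i 0 = 0.
    have <- : ((const_mx 1 : 'cV[R]_n)^T *m y) 0 0 = \sum_i y i 0.
      by rewrite mxE; apply: eq_big => // i _; rewrite !mxE mul1r.
    by rewrite /y mulmxBr ones_b !mulmxA oLp !mul0mx subrr mxE.
  have yu : y u 0 = 0.
    move: sum0; under eq_bigr do rewrite (yc _ u).
    rewrite sumr_const card_ord => /eqP; rewrite -mulr_natl mulf_eq0 pnatr_eq0.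
    case/orP => [|/eqP //].
    by rewrite gtn_eqF // (leq_ltn_trans (leq0n u) (ltn_ord u)).
  have y0 : y = 0 by apply/matrixP => i j; rewrite ord1 (yc i u) yu mxE.
  by apply/eqP; rewrite eq_sym -subr_eq0; apply/eqP; exact: y0.
have LPb : L *m Lp *m b = b by rewrite LX.
set s := (b^T *m Lp *m b) 0 0.
have bLb : b^T *m Lp *m b = s%:M by apply: mx11_scalar.
have s0 : 0 <= s.
  have -> : s = ((Lp *m b)^T *m L *m (Lp *m b)) 0 0.
    rewrite /s (trmx_mul Lp b) XT; congr (_ 0 0).
    by rewrite -[in LHS]h2 !mulmxA.
  exact: lap_psd.
have ws : 0 <= w * s by rewrite mulr_ge0 // ltW.
have den : 1 + w * s != 0 by rewrite gt_eqF //; lra.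
set c := w / (1 + w * s).
set N := b *m b^T *m Lp.
set X := Lp - c *: (Lp *m N).
have LN : L *m (Lp *m N) = N by rewrite /N !mulmxA LPb.
have BN : b *m b^T *m (Lp *m N) = s *: N.
  rewrite /N !mulmxA -(mulmxA b b^T Lp) -(mulmxA b (b^T *m Lp) b) bLb.
  by rewrite mul_mx_scalar -!scalemxAl mulmxA.
have LX' : laplacian (add_edge A u v w) *m X = L *m Lp.
  rewrite Ladd -/L /X mulmxDl !mulmxBr -!scalemxAr -!scalemxAl LN BN -/N !scalerA.
  have coef : - c + (w - c * w * s) = 0 by rewrite /c; field.
  by rewrite -scalerBl -addrA -scaleNr -scalerDl coef scale0r addr0.
have XTX : X^T = X.
  rewrite /X linearB linearZ /= (trmx_mul Lp N) /N (trmx_mul (b *m b^T) Lp).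
  by rewrite (trmx_mul b b^T) trmxK XT !mulmxA.
have L'T := lap_sym sA2.
have XL' : X *m laplacian (add_edge A u v w) = L *m Lp.
  by rewrite -XTX -L'T -(trmx_mul (laplacian (add_edge A u v w)) X) LX' h3.
have mpX : is_MPinv (laplacian (add_edge A u v w)) X.
  split.
  - by rewrite LX' Ladd mulmxDr scalemxAr !mulmxA LPb h1.
  - by rewrite XL' LX /X mulmxBr scalemxAr !mulmxA h2.
  - by rewrite LX' h3.
  - by rewrite XL' h3.
have eL' : Lp' = X := mp_unique mpL' mpX.
rewrite (nrE v XT X1) (nrE v XT' X1') eL'.
have eM : M = Lp *m N by rewrite /M /N !mulmxA.
rewrite eM /X linearB linearZ /= entryB entryZ /c.
field.
exact: den.
Qed.
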